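(* Let $B$ be a symmetric positive definite $3\times3$ matrix with orthonormal eigenvectors $\mathbf e_1,\mathbf e_2,\mathbf e_3$, and let $\mathbb M=\sum_{i=1}^3\mathbf e_i\mathbf e_i\mathbf e_i\mathbf e_i$ (so $\mathbb M_{abcd}=\sum_i (\mathbf e_i)_a(\mathbf e_i)_b(\mathbf e_i)_c(\mathbf e_i)_d$). Then for every symmetric $3\times3$ matrix $N$, $$\mathbb D(B):(\mathbb M:N)=\mathbb M:(\mathbb D(B):N).$$ Consequently, if $\frac{dA}{dt}=F$, $\frac{dB}{dt}=G$ with $F=-\mathbb C(B):G$ (equivalently $G=-\mathbb D(B):F$), and $0<\kappa\le1$, then replacing $F$ by $F-(1-\kappa)\mathbb M:F$ and $G$ by $G-(1-\kappa)\mathbb M:G$ preserves the relation $\frac{dB}{dt}=-\mathbb D(B):\frac{dA}{dt}$.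
   Context: For a symmetric positive definite matrix $B$, $$\mathbb C(B)=\tfrac34\int_0^\infty\frac{\mathcal S\big((B+sI)^{-1}\otimes(B+sI)^{-1}\big)\,ds}{\sqrt{\det(B+sI)}},$$ where $\mathcal S(\mathbb T)_{ijkl}$ is the average of $\mathbb T_{mnpq}$ over all permutations $(m,n,p,q)$ of $(i,j,k,l)$, and $(\mathbb T:M)_{ij}=\sum_{k,l}\mathbb T_{ijkl}M_{kl}$. The map $M\mapsto\mathbb C(B):M$ on symmetric matrices is invertible, and $\mathbb D(B)$ denotes the rank-4 tensor with $\mathbb D_{ijkl}=\mathbb D_{jikl}=\mathbb D_{ijlk}$ such that $\mathbb C(B):\mathbb D(B):M=\mathbb D(B):\mathbb C(B):M=M$ for all symmetric $M$. *)

(* Defs.v *)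
From HB Require Import structures.
From mathcomp Require Import all_boot all_order all_algebra all_fingroup.
From mathcomp Require Import all_classical all_reals all_analysis.
Set Implicit Arguments. Unset Strict Implicit. Unset Printing Implicit Defensive.
Import Order.TTheory GRing.Theory Num.Theory.
Local Open Scope ring_scope.
Local Open Scope classical_set_scope.

Definition tensor4 (R : realType) := 'I_3 -> 'I_3 -> 'I_3 -> 'I_3 -> R.

Definition ddot (R : realType) (T : tensor4 R) (M : 'M[R]_3) : 'M[R]_3 :=
  \matrix_(i < 3, j < 3) \sum_(k < 3) \sum_(l < 3) T i j k l * M k l.

Definition tprod (R : realType) (A A' : 'M[R]_3) : tensor4 R :=
  fun i j k l => A i j * A' k l.

Definition symmetrize (R : realType) (T : tensor4 R) : tensor4 R :=
  fun i j k l =>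
    let x : 'I_4 -> 'I_3 := fun p => tnth [tuple i; j; k; l] p in
    (4`!%:R)^-1 * \sum_(s : 'S_4)
       T (x (s ord0)) (x (s (inord 1))) (x (s (inord 2))) (x (s (inord 3))).

Definition C_integrand (R : realType) (B : 'M[R]_3) (i j k l : 'I_3) (s : R) : R :=
  let Bs := B + s%:M in
  symmetrize (tprod (invmx Bs) (invmx Bs)) i j k l / Num.sqrt (\det Bs).

Definition Ctensor (R : realType) (B : 'M[R]_3) : tensor4 R :=
  fun i j k l => (3%:R / 4%:R) *
    Rintegral (@lebesgue_measure R) `[0%R, +oo[ (C_integrand B i j k l).

Definition symmetric_mx (R : realType) (M : 'M[R]_3) : Prop := M^T = M.

Definition spd (R : realType) (B : 'M[R]_3) : Prop :=
  symmetric_mx B /\ forall v : 'cV[R]_3, v != 0 -> 0 < (v^T *m B *m v) ord0 ord0.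

Definition is_Dtensor (R : realType) (B : 'M[R]_3) (D : tensor4 R) : Prop :=
  (forall i j k l, D i j k l = D j i k l) /\
  (forall i j k l, D i j k l = D i j l k) /\
  (forall M : 'M[R]_3, symmetric_mx M ->
     ddot (Ctensor B) (ddot D M) = M /\ ddot D (ddot (Ctensor B) M) = M).

Definition Mtensor (R : realType) (e : 'I_3 -> 'cV[R]_3) : tensor4 R :=
  fun a b c d => \sum_(i < 3) e i a ord0 * e i b ord0 * e i c ord0 * e i d ord0.

(* Main.v *)
Require Import Defs.
From HB Require Import structures.
From mathcomp Require Import all_boot all_order all_algebra all_fingroup.
From mathcomp Require Import all_classical all_reals all_analysis.
From mathcomp Require Import measurable_realfun.
From mathcomp Require Import ring lra.
Set Implicit Arguments. Unset Strict Implicit. Unset Printing Implicit Defensive.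
Import Order.TTheory GRing.Theory Num.Theory.
Import numFieldNormedType.Exports.
Local Open Scope ring_scope.
Section Alg.
Context {R : realType} (e : 'I_3 -> 'cV[R]_3).
Hypothesis orth : forall i j : 'I_3, (e i)^T *m e j = (i == j)%:R%:M.
Implicit Types (T : tensor4 R) (A B Y X : 'M[R]_3).

Definition Pm p : 'M[R]_3 := e p *m (e p)^T.
Definition Qm (mu : 'I_3 -> R) : 'M[R]_3 := \sum_p mu p *: Pm p.
Definition yv p (Y : 'M[R]_3) : R := ((e p)^T *m Y *m e p) ord0 ord0.
Definition fro (A B : 'M[R]_3) : R := \sum_k \sum_l A k l * B k l.
Definition Mt := Mtensor e.
Definition comm (T : tensor4 R) :=
  forall X, ddot T (ddot Mt X) = ddot Mt (ddot T X).

Lemma PP p q : Pm p *m Pm q = (p == q)%:R *: Pm p.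
Proof.
rewrite /Pm mulmxA -(mulmxA (e p)) orth mul_mx_scalar -scalemxAl.
by case: eqVneq => [->|_]; rewrite ?scale1r ?scale0r.
Qed.

Lemma PmE p i j : Pm p i j = e p i 0 * e p j 0.
Proof. by rewrite /Pm mxE big_ord1 mxE. Qed.

Lemma Pm_tr p : (Pm p)^T = Pm p.
Proof. by rewrite /Pm trmx_mul trmxK. Qed.

Lemma QmE mu i j : Qm mu i j = \sum_p mu p * (e p i 0 * e p j 0).
Proof. by rewrite /Qm summxE; apply: eq_bigr => p _; rewrite mxE PmE. Qed.

Lemma Qm_sym mu i j : Qm mu i j = Qm mu j i.
Proof. by rewrite !QmE; apply: eq_bigr => p _; rewrite (mulrC (e p i 0)). Qed.

Lemma Qm_tr mu : (Qm mu)^T = Qm mu.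
Proof. by apply/matrixP => i j; rewrite mxE Qm_sym. Qed.

Lemma QP mu p : Qm mu *m Pm p = mu p *: Pm p.
Proof.
rewrite /Qm mulmx_suml (bigD1 p) //= big1 ?addr0.
  by rewrite -scalemxAl PP eqxx scale1r.
by move=> q /negPf qp; rewrite -scalemxAl PP qp scale0r scaler0.
Qed.

Lemma PQ mu p : Pm p *m Qm mu = mu p *: Pm p.
Proof.
rewrite /Qm mulmx_sumr (bigD1 p) //= big1 ?addr0.
  by rewrite -scalemxAr PP eqxx scale1r.
by move=> q /negPf qp; rewrite -scalemxAr PP eq_sym qp scale0r scaler0.
Qed.

Lemma QQ a b : Qm a *m Qm b = Qm (fun p => a p * b p).
Proof.
rewrite {1}/Qm mulmx_suml /Qm; apply: eq_bigr => p _.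
by rewrite -scalemxAl PQ scalerA.
Qed.

Lemma eQ mu p : (e p)^T *m Qm mu = mu p *: (e p)^T.
Proof.
rewrite /Qm mulmx_sumr (bigD1 p) //= big1 ?addr0.
  by rewrite -scalemxAr /Pm mulmxA orth eqxx mul_scalar_mx scale1r.
move=> q /negPf qp; rewrite -scalemxAr /Pm mulmxA orth eq_sym qp.
by rewrite mul_scalar_mx !scale0r scaler0.
Qed.

Lemma Qe mu p : Qm mu *m e p = mu p *: e p.
Proof.
rewrite /Qm mulmx_suml (bigD1 p) //= big1 ?addr0.
  by rewrite -scalemxAl /Pm -mulmxA orth eqxx mul_mx_scalar scale1r.
move=> q /negPf qp; rewrite -scalemxAl /Pm -mulmxA orth qp.
by rewrite mul_mx_scalar !scale0r scaler0.
Qed.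

Lemma yvE p Y : yv p Y = \sum_k \sum_l e p k 0 * e p l 0 * Y k l.
Proof.
rewrite /yv mxE exchange_big /=; apply: eq_bigr => l _.
rewrite mxE mulr_suml; apply: eq_bigr => k _.
by rewrite mxE; ring.
Qed.

Lemma froPm p Y : fro (Pm p) Y = yv p Y.
Proof.
rewrite yvE /fro; apply: eq_bigr => k _; apply: eq_bigr => l _.
by rewrite PmE.
Qed.

Lemma yvD p A B : yv p (A + B) = yv p A + yv p B.
Proof. by rewrite !yvE -!big_split; apply: eq_bigr => k _; rewrite -big_split; apply: eq_bigr => l _; rewrite mxE mulrDr. Qed.

Lemma yvZ p a A : yv p (a *: A) = a * yv p A.
Proof.
rewrite !yvE mulr_sumr; apply: eq_bigr => k _; rewrite mulr_sumr; apply: eq_bigr => l _.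
by rewrite mxE; ring.
Qed.

Lemma yv_sum p (F : 'I_3 -> 'M[R]_3) : yv p (\sum_q F q) = \sum_q yv p (F q).
Proof.
rewrite yvE; under eq_bigr do under eq_bigr do rewrite summxE mulr_sumr.
rewrite (eq_bigr (fun k => \sum_q \sum_l e p k 0 * e p l 0 * F q k l)).
  by rewrite exchange_big; apply: eq_bigr => q _; rewrite yvE.
by move=> k _; rewrite exchange_big.
Qed.

Lemma yvP p q : yv p (Pm q) = (p == q)%:R.
Proof.
rewrite /yv /Pm !mulmxA orth -mulmxA orth mul_mx_scalar !mxE /= eq_sym.
by case: eqVneq => _; rewrite ?mulr1 ?mulr0.
Qed.

Lemma yvQ p mu : yv p (Qm mu) = mu p.
Proof.
rewrite /yv eQ -scalemxAl mxE orth eqxx mxE /= mulr1 //.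
Qed.

Lemma yvQYQ p mu Y : yv p (Qm mu *m Y *m Qm mu) = mu p ^+ 2 * yv p Y.
Proof.
rewrite /yv !mulmxA eQ -!mulmxA Qe -scalemxAl -!scalemxAr scalerA.
by rewrite [in LHS]mxE !mulmxA expr2.
Qed.

Lemma yv_tr p Y : yv p Y^T = yv p Y.
Proof.
by rewrite /yv -(trmxK (e p)) -!trmx_mul mxE trmxK mulmxA.
Qed.


Lemma Mform Y : ddot Mt Y = \sum_p yv p Y *: Pm p.
Proof.
apply/matrixP => i j; rewrite mxE summxE.
under eq_bigr do under eq_bigr do rewrite /Mt /Mtensor mulr_suml.
under eq_bigr do rewrite exchange_big /=.
rewrite exchange_big /=; apply: eq_bigr => p _.
rewrite mxE PmE yvE mulr_suml; apply: eq_bigr => k _.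
rewrite mulr_suml; apply: eq_bigr => l _; ring.
Qed.

Lemma ddotD T A B : ddot T (A + B) = ddot T A + ddot T B.
Proof.
apply/matrixP => i j; rewrite !mxE -big_split; apply: eq_bigr => k _.
rewrite -big_split; apply: eq_bigr => l _; by rewrite mxE mulrDr.
Qed.

Lemma ddotZ T a A : ddot T (a *: A) = a *: ddot T A.
Proof.
apply/matrixP => i j; rewrite !mxE mulr_sumr; apply: eq_bigr => k _.
rewrite mulr_sumr; apply: eq_bigr => l _; rewrite mxE; ring.
Qed.

Lemma ddotN T A : ddot T (- A) = - ddot T A.
Proof. by rewrite -scaleN1r ddotZ scaleN1r. Qed.

Lemma ddot_sum T (F : 'I_3 -> 'M[R]_3) : ddot T (\sum_p F p) = \sum_p ddot T (F p).
Proof.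
apply/matrixP => i j; rewrite !mxE summxE.
under eq_bigr do under eq_bigr do rewrite summxE mulr_sumr.
under eq_bigr do rewrite exchange_big /=.
rewrite exchange_big /=; apply: eq_bigr => p _; rewrite mxE //.
Qed.

Lemma MQ mu : ddot Mt (Qm mu) = Qm mu.
Proof. by rewrite Mform /Qm; apply: eq_bigr => p _; rewrite yvQ. Qed.

Lemma trZ (a : R) (A : 'M[R]_3) : (a *: A)^T = a *: A^T.
Proof. by apply/matrixP => i j; rewrite !mxE. Qed.

Lemma Mt_tr Y : (ddot Mt Y)^T = ddot Mt Y.
Proof.
rewrite Mform; apply/matrixP => i j; rewrite mxE !summxE; apply: eq_bigr => p _.
by rewrite -[in LHS](Pm_tr p) -trZ mxE.
Qed.

Lemma froQ mu Y : fro (Qm mu) Y = \sum_p mu p * yv p Y.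
Proof.
rewrite /fro; under eq_bigr do under eq_bigr do rewrite QmE mulr_suml.
under eq_bigr do rewrite exchange_big /=.
rewrite exchange_big /=; apply: eq_bigr => p _.
rewrite yvE mulr_sumr; apply: eq_bigr => k _; rewrite mulr_sumr.
by apply: eq_bigr => l _; ring.
Qed.

Definition TA (Q : 'M[R]_3) : tensor4 R := fun i j k l => Q i j * Q k l.
Definition TB (Q : 'M[R]_3) : tensor4 R := fun i j k l => Q i k * Q j l.
Definition TC (Q : 'M[R]_3) : tensor4 R := fun i j k l => Q i l * Q j k.

Lemma ddotTA Q Y : ddot (TA Q) Y = fro Q Y *: Q.
Proof.
apply/matrixP => i j; rewrite !mxE /fro mulr_suml; apply: eq_bigr => k _.
rewrite mulr_suml; apply: eq_bigr => l _; rewrite /TA; ring.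
Qed.

Lemma ddotTB Q Y : ddot (TB Q) Y = Q *m Y *m Q^T.
Proof.
apply/matrixP => i j; rewrite !mxE exchange_big /=; apply: eq_bigr => l _.
rewrite !mxE mulr_suml; apply: eq_bigr => k _. rewrite /TB; ring.
Qed.

Lemma ddotTC Q Y : ddot (TC Q) Y = Q *m Y^T *m Q^T.
Proof.
apply/matrixP => i j; rewrite !mxE; apply: eq_bigr => k _.
rewrite !mxE mulr_suml; apply: eq_bigr => l _; rewrite !mxE /TC; ring.
Qed.

Lemma commTA mu : comm (TA (Qm mu)).
Proof.
move=> X; rewrite !ddotTA ddotZ MQ; congr (_ *: _).
rewrite !froQ Mform; apply: eq_bigr => p _.
rewrite yv_sum (bigD1 p) //= big1 ?addr0.
  by rewrite yvZ yvP eqxx mulr1.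
by move=> q /negPf qp; rewrite yvZ yvP eq_sym qp mulr0.
Qed.

Lemma QMQ mu Y : Qm mu *m ddot Mt Y *m Qm mu = ddot Mt (Qm mu *m Y *m Qm mu).
Proof.
rewrite !Mform; rewrite [Qm mu *m _]mulmx_sumr mulmx_suml; apply: eq_bigr => p _.
rewrite -scalemxAr -scalemxAl QP -scalemxAl PQ yvQYQ !scalerA; congr (_ *: _).
by rewrite expr2; ring.
Qed.

Lemma commTB mu : comm (TB (Qm mu)).
Proof. by move=> X; rewrite !ddotTB Qm_tr QMQ. Qed.

Lemma commTC mu : comm (TC (Qm mu)).
Proof.
move=> X; rewrite !ddotTC Qm_tr Mt_tr QMQ !Mform; apply: eq_bigr => p _.
by rewrite !yvQYQ yv_tr.
Qed.

Lemma commZl c T : comm T -> comm (fun i j k l => c * T i j k l).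
Proof.
move=> cT X.
have E Y : ddot (fun i j k l => c * T i j k l) Y = c *: ddot T Y.
  apply/matrixP => i j; rewrite !mxE mulr_sumr; apply: eq_bigr => k _.
  by rewrite mulr_sumr; apply: eq_bigr => l _; rewrite mulrA.
by rewrite !E cT ddotZ.
Qed.

Lemma commZr c T : comm T -> comm (fun i j k l => T i j k l * c).
Proof.
move=> cT; have -> : (fun i j k l => T i j k l * c) = (fun i j k l => c * T i j k l).
  by do 4 (apply: funext => ?); rewrite mulrC.
exact: commZl.
Qed.

Lemma comm_sum (I : finType) (T : I -> tensor4 R) :
  (forall s, comm (T s)) -> comm (fun i j k l => \sum_s T s i j k l).
Proof.
move=> cT X.
have E Y : ddot (fun i j k l => \sum_s T s i j k l) Y = \sum_s ddot (T s) Y.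
  apply/matrixP => i j; rewrite !mxE summxE.
  under eq_bigr do under eq_bigr do rewrite mulr_suml.
  under eq_bigr do rewrite exchange_big /=.
  by rewrite exchange_big /=; apply: eq_bigr => s _; rewrite mxE.
rewrite !E; under eq_bigr do rewrite cT.
apply/matrixP => i j; rewrite summxE !mxE; under eq_bigr do rewrite mxE.
under [in RHS]eq_bigr do under eq_bigr do rewrite summxE mulr_sumr.
under [in RHS]eq_bigr do rewrite exchange_big /=.
by rewrite [in RHS]exchange_big /=.
Qed.

End Alg.

Section Cl.
Context {R : realType}.

Lemma classify (Q : 'M[R]_3) (QC : forall a b, Q a b = Q b a) (s : 'S_4) :
  (fun i j k l : 'I_3 => let x : 'I_4 -> 'I_3 := fun p => tnth [tuple i; j; k; l] p in
    Q (x (s ord0)) (x (s (inord 1))) * Q (x (s (inord 2))) (x (s (inord 3))))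
  = TA Q \/ (fun i j k l : 'I_3 => let x : 'I_4 -> 'I_3 := fun p => tnth [tuple i; j; k; l] p in
    Q (x (s ord0)) (x (s (inord 1))) * Q (x (s (inord 2))) (x (s (inord 3)))) = TB Q \/
  (fun i j k l : 'I_3 => let x : 'I_4 -> 'I_3 := fun p => tnth [tuple i; j; k; l] p in
    Q (x (s ord0)) (x (s (inord 1))) * Q (x (s (inord 2))) (x (s (inord 3)))) = TC Q.
Proof.
have inj := @perm_inj _ s.
have D (u v : 'I_4) : u != v -> s u != s v by rewrite (inj_eq inj).
have d01 := D ord0 (inord 1) (ltac:(by rewrite -val_eqE /= ?inordK)).
have d02 := D ord0 (inord 2) (ltac:(by rewrite -val_eqE /= ?inordK)).
have d03 := D ord0 (inord 3) (ltac:(by rewrite -val_eqE /= ?inordK)).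
have d12 := D (inord 1) (inord 2) (ltac:(by rewrite -val_eqE /= ?inordK)).
have d13 := D (inord 1) (inord 3) (ltac:(by rewrite -val_eqE /= ?inordK)).
have d23 := D (inord 2) (inord 3) (ltac:(by rewrite -val_eqE /= ?inordK)).
move: (s ord0) (s (inord 1)) (s (inord 2)) (s (inord 3)) d01 d02 d03 d12 d13 d23.
move=> a b c d.
case: a => [[|[|[|[|?]]]] ?] //; case: b => [[|[|[|[|?]]]] ?] //;
case: c => [[|[|[|[|?]]]] ?] //; case: d => [[|[|[|[|?]]]] ?] //.
all: move=> _ _ _ _ _ _.
all: first [(left; apply/funext => i; apply/funext => j; apply/funext => k; apply/funext => l;
  rewrite /TA /TB /TC /tnth /=;
  rewrite ?(QC j i) ?(QC k i) ?(QC l i) ?(QC k j) ?(QC l j) ?(QC l k);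
  first [done | exact: mulrC]) | (right; left; apply/funext => i; apply/funext => j; apply/funext => k; apply/funext => l;
  rewrite /TA /TB /TC /tnth /=;
  rewrite ?(QC j i) ?(QC k i) ?(QC l i) ?(QC k j) ?(QC l j) ?(QC l k);
  first [done | exact: mulrC]) | (right; right; apply/funext => i; apply/funext => j; apply/funext => k; apply/funext => l;
  rewrite /TA /TB /TC /tnth /=;
  rewrite ?(QC j i) ?(QC k i) ?(QC l i) ?(QC k j) ?(QC l j) ?(QC l k);
  first [done | exact: mulrC])].
Qed.
End Cl.

Section Eig.
Context {R : realType} (e : 'I_3 -> 'cV[R]_3).
Hypothesis orth : forall i j : 'I_3, (e i)^T *m e j = (i == j)%:R%:M.

Definition Em : 'M[R]_3 := \matrix_(i, p) e p i 0.

Lemma EtE : Em^T *m Em = 1%:M.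
Proof.
apply/matrixP => p q.
transitivity (((e p)^T *m e q) 0 0).
  by rewrite !mxE; apply: eq_bigr => k _; rewrite !mxE.
by rewrite orth !mxE /= mulr1n; case: eqVneq.
Qed.

Lemma EEt : Em *m Em^T = 1%:M.
Proof. exact: mulmx1C EtE. Qed.

Lemma compl : \sum_p Pm e p = 1%:M.
Proof.
rewrite -EEt; apply/matrixP => i j; rewrite summxE mxE.
by apply: eq_bigr => p _; rewrite PmE !mxE.
Qed.

Lemma Qm1 : Qm e (fun _ => 1) = 1%:M.
Proof. by rewrite /Qm -compl; apply: eq_bigr => p _; rewrite scale1r. Qed.

Lemma QmD a s : Qm e (fun p => a p + s) = Qm e a + s%:M.
Proof.
rewrite /Qm -scalemx1 -compl scaler_sumr -big_split; apply: eq_bigr => p _.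
by rewrite scalerDl.
Qed.

Lemma Qm_inv a : (forall p, a p != 0) -> invmx (Qm e a) = Qm e (fun p => (a p)^-1).
Proof.
move=> a0.
have h : Qm e a *m Qm e (fun p => (a p)^-1) = 1%:M.
  rewrite QQ // -Qm1 /Qm; apply: eq_bigr => p _; by rewrite mulfV.
have [ua _] := mulmx1_unit h.
by rewrite -[invmx _]mulmx1 -h mulmxA mulVmx // mul1mx.
Qed.

Lemma Qm_det a : \det (Qm e a) = \prod_p a p.
Proof.
have -> : Qm e a = Em *m diag_mx (\row_p a p) *m Em^T.
  apply/matrixP => i j; rewrite mul_mx_diag QmE mxE; apply: eq_bigr => p _.
  by rewrite !mxE; ring.
rewrite !det_mulmx det_diag det_tr.
have h : \det Em^T * \det Em = 1 by rewrite -det_mulmx EtE det1.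
rewrite det_tr in h.
rewrite mulrC mulrA h mul1r; apply: eq_bigr => p _; by rewrite mxE.
Qed.

Lemma Bdecomp (B : 'M[R]_3) lam : (forall p, B *m e p = lam p *: e p) -> B = Qm e lam.
Proof.
move=> eig; rewrite -[B]mulmx1 -compl mulmx_sumr /Qm; apply: eq_bigr => p _.
by rewrite /Pm mulmxA eig -scalemxAl.
Qed.

End Eig.

Section Ana.
Context {R : realType}.
Notation mu := (@lebesgue_measure R).
Local Notation D := (`[0%R, +oo[%classic : set (measurableTypeR R)).
Definition intg (f : R -> R) := mu.-integrable D (EFin \o f).

Lemma mD : measurable D. Proof. exact: measurable_itv. Qed.

Lemma cont_u (c : R) : 0 < c -> continuous (fun s : R => (c + `|s|)^-1).
Proof.
move=> c0 x.
have h := @continuousV R R (fun s : R => c + `|s|) x.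
apply: h; first by rewrite gt_eqF // ltr_wpDr.
apply: continuousD; first exact: cst_continuous.
exact: norm_continuous.
Qed.

Lemma int_u2 (c : R) : 0 < c -> intg (fun s : R => ((c + `|s|)^-1) ^+ 2).
Proof.
move=> c0.
have cf : continuous (fun s : R => ((c + `|s|)^-1) ^+ 2).
  have -> : (fun s : R => ((c + `|s|)^-1) ^+ 2) = (fun s : R => (c + `|s|)^-1) \* (fun s : R => (c + `|s|)^-1).
    by apply/funext => s; rewrite /= expr2.
  move=> x; have h := @continuousM R R (fun s : R => (c + `|s|)^-1) (fun s : R => (c + `|s|)^-1) x.
  by apply: h; apply: cont_u.
have mf : measurable_fun D (fun s : R => ((c + `|s|)^-1) ^+ 2).
  have := continuous_measurable_fun cf; exact: measurable_funS.
apply/integrableP; split; first exact/measurable_EFinP.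
rewrite (_ : (\int[mu]_(x in D) _ = \int[mu]_(x in D) ((((c + `|x|)^-1) ^+ 2)%R)%:E)%E); last first.
  by apply: eq_integral => x _ /=; rewrite ger0_norm // sqr_ge0.
have cF : {for 0, continuous (fun x : R => - (c + x)^-1)}.
  apply: continuousN.
  have h := @continuousV R R (fun s : R => c + s) 0.
  apply: h; first by rewrite addr0 gt_eqF.
  apply: continuousD; first exact: cst_continuous.
  exact: cvg_id.
rewrite (@ge0_continuous_FTC2y _ _ (fun x => - (c + x)^-1) 0 0).
- by rewrite ltry.
- by move=> x _; exact: sqr_ge0.
- exact: continuous_subspaceT.
- rewrite -oppr0; apply: cvgN.
  apply/gtr0_cvgV0.
    by near=> y; rewrite ltr_wpDr // ltW //; near: y; exact: nbhs_pinfty_gt.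
  exact: cvg_addrl.
- move=> x x0; apply: derivableN; apply: derivableV.
    by rewrite gt_eqF // ltr_wpDr // ltW.
  by apply: derivableD; [exact: derivable_cst | exact: derivable_id].
- by apply: cvg_at_right_filter; exact: cF.
- move=> x; rewrite in_itv /= andbT => x0.
  rewrite derive1E deriveN; last first.
    apply: derivableV; first by rewrite gt_eqF // ltr_wpDr // ltW.
    by apply: derivableD; [exact: derivable_cst | exact: derivable_id].
  rewrite deriveV; last 2 first.
      by rewrite gt_eqF // ltr_wpDr // ltW.
    by apply: derivableD; [exact: derivable_cst | exact: derivable_id].
  rewrite deriveD; [|exact: derivable_cst | exact: derivable_id].
  rewrite derive_cst derive_id.
  by rewrite add0r scaler1 opprK gtr0_norm // exprVn.
Unshelve. all: by end_near. Qed.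

Lemma intZ (k : R) f : intg f -> intg (fun s => k * f s).
Proof.
move=> h; have := integrableZl mD k h.
by apply: eq_integrable => // x _ /=; rewrite EFinM.
Qed.

Lemma intD f g : intg f -> intg g -> intg (fun s => f s + g s).
Proof.
move=> hf hg; have := integrableD mD hf hg.
by apply: eq_integrable => // x _ /=; rewrite EFinD.
Qed.

Lemma int_sum (I : Type) (r : seq I) (f : I -> R -> R) :
  (forall i, intg (f i)) -> intg (fun s => \sum_(i <- r) f i s).
Proof.
move=> h; elim: r => [|i r IH].
  have := integrable0 mu D; apply: eq_integrable => // x _ /=; by rewrite big_nil.
have := intD (h i) IH; apply: eq_integrable => // x _ /=; by rewrite big_cons.
Qed.

Lemma Rint_sum (I : Type) (r : seq I) (f : I -> R -> R) :
  (forall i, intg (f i)) ->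
  Rintegral mu D (fun s => \sum_(i <- r) f i s) = \sum_(i <- r) Rintegral mu D (f i).
Proof.
move=> h; elim: r => [|i r IH].
  rewrite big_nil (@eq_Rintegral _ _ _ mu D (fun=> 0)); last by move=> x _; rewrite big_nil.
  by rewrite Rintegral_cst ?mul0r //; exact: mD.
rewrite big_cons -IH -(@RintegralD _ _ _ mu D (f i) (fun s => \sum_(j <- r) f j s) mD (h i) (int_sum r h)).
by apply: eq_Rintegral => x _; rewrite big_cons.
Qed.

Lemma lin2 (c : 'I_3 -> 'I_3 -> R) (f : 'I_3 -> 'I_3 -> R -> R) :
  (forall k l, intg (f k l)) ->
  intg (fun s => \sum_k \sum_l f k l s * c k l) /\
  \sum_k \sum_l Rintegral mu D (f k l) * c k l
    = Rintegral mu D (fun s => \sum_k \sum_l f k l s * c k l).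
Proof.
move=> h.
have h1 : forall k l, intg (fun s => f k l s * c k l).
  move=> k l; have := intZ (c k l) (h k l).
  by apply: eq_integrable => // x _ /=; rewrite mulrC.
have h2 : forall k, intg (fun s => \sum_l f k l s * c k l) by move=> k; exact: int_sum.
split; first exact: int_sum.
rewrite Rint_sum //; apply: eq_bigr => k _.
rewrite Rint_sum //; apply: eq_bigr => l _.
by rewrite (@RintegralZr _ _ _ mu D (f k l) (c k l) mD (h k l)).
Qed.

Lemma lin2l (c : 'I_3 -> 'I_3 -> R) (f : 'I_3 -> 'I_3 -> R -> R) :
  (forall k l, intg (f k l)) ->
  \sum_k \sum_l c k l * Rintegral mu D (f k l)
    = Rintegral mu D (fun s => \sum_k \sum_l c k l * f k l s).
Proof.
move=> h; have [_ E] := lin2 c h.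
under eq_bigr do under eq_bigr do rewrite mulrC.
rewrite E; apply: eq_Rintegral => x _.
by apply: eq_bigr => k _; apply: eq_bigr => l _; rewrite mulrC.
Qed.

End Ana.

Section Spec.
Context {R : realType} (e : 'I_3 -> 'cV[R]_3) (lam : 'I_3 -> R).
Hypothesis orth : forall i j : 'I_3, (e i)^T *m e j = (i == j)%:R%:M.
Hypothesis lam_pos : forall p, 0 < lam p.
Notation mu := (@lebesgue_measure R).
Local Notation D := (`[0%R, +oo[%classic : set (measurableTypeR R)).

Definition uu (s : R) : 'I_3 -> R := fun p => (lam p + `|s|)^-1.
Definition sq (s : R) : R := Num.sqrt (\prod_p (lam p + `|s|)).
Definition term (Q : 'M[R]_3) (s : 'S_4) : tensor4 R :=
  fun i j k l : 'I_3 => let x : 'I_4 -> 'I_3 := fun p => tnth [tuple i; j; k; l] p in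
    Q (x (s ord0)) (x (s (inord 1))) * Q (x (s (inord 2))) (x (s (inord 3))).
Definition Gt (s : R) : tensor4 R :=
  fun i j k l => symmetrize (tprod (Qm e (uu s)) (Qm e (uu s))) i j k l / sq s.

Lemma GtE s : Gt s = fun i j k l =>
  ((4`!%:R)^-1 * \sum_(σ : 'S_4) term (Qm e (uu s)) σ i j k l) * (sq s)^-1.
Proof. by []. Qed.

Lemma comm_Gt s : comm e (Gt s).
Proof.
rewrite GtE; apply: commZr; apply: commZl; apply: comm_sum => σ.
have QC : forall a b, Qm e (uu s) a b = Qm e (uu s) b a by move=> a b; exact: Qm_sym.
have [E|[E|E]] := classify QC σ; rewrite /term E.
- exact: commTA.
- exact: commTB.
- exact: commTC.
Qed.

Lemma cont_prod (r : seq 'I_3) (F : 'I_3 -> R -> R) :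
  (forall p, continuous (F p)) -> continuous (fun s => \prod_(p <- r) F p s).
Proof.
move=> cF; elim: r => [|p r IH].
  have -> : (fun s => \prod_(p <- [::]) F p s) = (fun=> 1) by apply/funext => s; rewrite big_nil.
  exact: cst_continuous.
have -> : (fun s => \prod_(i <- p :: r) F i s) = (F p) \* (fun s => \prod_(i <- r) F i s).
  by apply/funext => s; rewrite big_cons.
move=> x; have h := @continuousM R R (F p) (fun s => \prod_(i <- r) F i s) x.
by apply: h; [exact: cF | exact: IH].
Qed.

Lemma prod_gt0 (s : R) : 0 < \prod_p (lam p + `|s|).
Proof. by apply: prodr_gt0 => p _; rewrite ltr_wpDr. Qed.

Lemma sq_gt0 (s : R) : 0 < sq s.
Proof. by rewrite /sq sqrtr_gt0 prod_gt0. Qed.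

Lemma cont_isq : continuous (fun s => (sq s)^-1).
Proof.
move=> x; have h := @continuousV R R sq x.
apply: h; first by rewrite gt_eqF // sq_gt0.
have h2 := @continuous_comp R R R (fun s => \prod_p (lam p + `|s|)) (@Num.sqrt R) x.
apply: h2; last exact: sqrt_continuous.
apply: cont_prod => p y.
apply: continuousD; first exact: cst_continuous.
exact: norm_continuous.
Qed.

Lemma uu_ge0 (s : R) p : 0 <= uu s p.
Proof. by rewrite /uu invr_ge0 ltW // ltr_wpDr. Qed.

Lemma int_phi p q : intg (fun s => uu s p * uu s q / sq s).
Proof.
set K := (Num.sqrt (\prod_p lam p))^-1.
have K0 : 0 < Num.sqrt (\prod_p lam p) by rewrite sqrtr_gt0 prodr_gt0.
have hg : intg (fun s => K * (uu s p ^+ 2 + uu s q ^+ 2)).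
  by apply: intZ; apply: intD; apply: int_u2.
have cphi : continuous (fun s => uu s p * uu s q / sq s).
  move=> x.
  have h := @continuousM R R (fun s => uu s p * uu s q) (fun s => (sq s)^-1) x.
  apply: h; last exact: cont_isq.
  have h := @continuousM R R (fun s => uu s p) (fun s => uu s q) x.
  by apply: h; apply: cont_u.
rewrite /intg; apply: (@le_integrable _ _ _ mu D mD _ (EFin \o (fun s => K * (uu s p ^+ 2 + uu s q ^+ 2)))) => //.
  apply/measurable_EFinP.
  have := continuous_measurable_fun cphi; exact: measurable_funS.
move=> x _ /=; rewrite lee_fin.
have a0 := uu_ge0 x p; have b0 := uu_ge0 x q.
have w0 : 0 <= (sq x)^-1 by rewrite invr_ge0 ltW // sq_gt0.
have wK : (sq x)^-1 <= K.
  rewrite /K lef_pV2 ?posrE ?sq_gt0 //.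
  rewrite /sq ler_sqrt; last exact: ltW (prod_gt0 x).
  by apply: ler_prod => i _; rewrite (ltW (lam_pos i)) lerDl normr_ge0.
rewrite ger0_norm; last by rewrite mulr_ge0 // mulr_ge0.
rewrite ger0_norm; last by rewrite mulr_ge0 ?(le_trans w0 wK) // addr_ge0 // sqr_ge0.
have ab : uu x p * uu x q <= uu x p ^+ 2 + uu x q ^+ 2 by nra.
rewrite [K * _]mulrC; apply: ler_pM => //; exact: mulr_ge0.
Qed.

Lemma int_term a b c d : intg (fun s => Qm e (uu s) a b * Qm e (uu s) c d / sq s).
Proof.
have h : intg (fun s => \sum_p \sum_q (Pm e p a b * Pm e q c d) * (uu s p * uu s q / sq s)).
  apply: int_sum => p; apply: int_sum => q; apply: intZ; exact: int_phi.
apply: eq_integrable h => // x _ /=; congr (_%:E).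
rewrite !QmE big_distrlr /= mulr_suml; apply: eq_bigr => p _.
rewrite mulr_suml; apply: eq_bigr => q _; rewrite !PmE; ring.
Qed.

Lemma int_Gt i j k l : intg (fun s => Gt s i j k l).
Proof.
have h : intg (fun s => (4`!%:R)^-1 * \sum_(σ : 'S_4)
     (term (Qm e (uu s)) σ i j k l / sq s)).
  apply: intZ; apply: int_sum => σ; exact: int_term.
apply: eq_integrable h => // x _ /=; congr (_%:E).
by rewrite GtE -mulrA mulr_suml.
Qed.

End Spec.

Section Int.
Context {R : realType} (e : 'I_3 -> 'cV[R]_3).
Notation mu := (@lebesgue_measure R).
Local Notation D := (`[0%R, +oo[%classic : set (measurableTypeR R)).

Lemma comm_int (G : R -> tensor4 R) :
  (forall i j k l, intg (fun s => G s i j k l)) -> (forall s, comm e (G s)) ->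
  comm e (fun i j k l => Rintegral mu D (fun s => G s i j k l)).
Proof.
move=> hi hc X; apply/matrixP => i j.
have E1 : forall s, (ddot (G s) (ddot (Mt e) X)) i j
    = \sum_k \sum_l G s i j k l * (ddot (Mt e) X) k l by move=> s; rewrite mxE.
have E2 : forall s, (ddot (Mt e) (ddot (G s) X)) i j
    = \sum_k \sum_l Mt e i j k l * \sum_a \sum_b G s k l a b * X a b.
  by move=> s; rewrite mxE; apply: eq_bigr => k _; apply: eq_bigr => l _; rewrite mxE.
have F k l : intg (fun s => \sum_a \sum_b G s k l a b * X a b).
  exact: (lin2 (fun a b => X a b) (hi k l)).1.
rewrite mxE [RHS]mxE.
rewrite (lin2 (fun k l => ddot (Mt e) X k l) (hi i j)).2.
under [RHS]eq_bigr => k _ do under eq_bigr => l _ do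
  rewrite mxE (lin2 (fun a b => X a b) (hi k l)).2.
rewrite (lin2l (fun k l => Mt e i j k l) F).
apply: eq_Rintegral => s _.
by rewrite -E1 -E2 hc.
Qed.

End Int.

Theorem mainTheorem15 (R : realType) (B : 'M[R]_3) (e : 'I_3 -> 'cV[R]_3)
  (D : tensor4 R) :
  spd B ->
  (forall i j : 'I_3, (e i)^T *m e j = (i == j)%:R%:M) ->
  (forall i : 'I_3, exists lam : R, B *m e i = lam *: e i) ->
  is_Dtensor B D ->
  (forall N : 'M[R]_3, symmetric_mx N ->
     ddot D (ddot (Mtensor e) N) = ddot (Mtensor e) (ddot D N)) /\
  (forall (F G : 'M[R]_3) (kappa : R),
     symmetric_mx F -> symmetric_mx G ->
     F = - ddot (Ctensor B) G ->
     0 < kappa <= 1 ->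
     G - (1 - kappa) *: ddot (Mtensor e) G
       = - ddot D (F - (1 - kappa) *: ddot (Mtensor e) F)).
Proof.
move=> [Bsym Bpos] horth heig [_ [_ DC]].
have [lam hlam] := choice heig.
have lam_pos p : 0 < lam p.
  have ne : e p != 0.
    apply/eqP => h0; move/matrixP/(_ 0 0): (horth p p).
    by rewrite h0 mulmx0 eqxx !mxE /= mulr1n => /esym/eqP; rewrite oner_eq0.
  have := Bpos (e p) ne.
  by rewrite -mulmxA hlam -scalemxAr horth eqxx !mxE /= mulr1n mulr1.
have BE : B = Qm e lam by exact: Bdecomp.
have CE : Ctensor B = fun i j k l => (3%:R / 4%:R) *
    Rintegral (@lebesgue_measure R) (`[0%R, +oo[%classic : set (measurableTypeR R))
      (fun s => Gt e lam s i j k l).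
  apply/funext => i; apply/funext => j; apply/funext => k; apply/funext => l.
  rewrite /Ctensor; congr (_ * _); apply: eq_Rintegral => s.
  rewrite inE /= in_itv /= andbT => s0.
  rewrite /C_integrand /Gt /sq /=.
  have sE : `|s| = s by rewrite ger0_norm.
  have Bs : B + s%:M = Qm e (fun p => lam p + s) by rewrite QmD // BE.
  rewrite Bs Qm_inv //; last by move=> p; rewrite gt_eqF // ltr_wpDr.
  rewrite Qm_det // /uu sE //.
have commC : comm e (Ctensor B).
  rewrite CE; apply: commZl; apply: comm_int.
    move=> i j k l; exact: int_Gt.
  move=> s; exact: comm_Gt.
have part1 : forall N : 'M[R]_3, symmetric_mx N ->
     ddot D (ddot (Mtensor e) N) = ddot (Mtensor e) (ddot D N).
  move=> N symN.
  have Ysym : symmetric_mx (ddot (Mtensor e) (ddot D N)) by exact: Mt_tr.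
  have CY : ddot (Ctensor B) (ddot (Mtensor e) (ddot D N)) = ddot (Mtensor e) N.
    by have := commC (ddot D N); rewrite /Mt => ->; rewrite (DC N symN).1.
  by have := (DC _ Ysym).2; rewrite CY.
split => // F G kappa symF symG hF _.
have DF : ddot D F = - G by rewrite hF ddotN (DC G symG).2.
have DMF : ddot D (ddot (Mtensor e) F) = - ddot (Mtensor e) G.
  by rewrite part1 // DF ddotN.
rewrite ddotD ddotN ddotZ DMF DF.
by rewrite scalerN !opprD !opprK.
Qed.
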